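(* Let $X$ be a real Banach space, $x \in S(X)$ and $0<t<2$. Suppose there exist $f \in S(X^* )$ and $\alpha \in (0,1)$ such that $x \in S := S(B(X), f, \alpha)$ and $\operatorname{diam}(S) < t/5$. Then \[ s(x, f, t) \geq \min\left\{\frac{f(x) - \alpha}{\alpha}, \frac{t}{20}\right\} > 0. \]
   Context: $B(X)$ is the closed unit ball and $S(X)$ the unit sphere of $X$; $X^*$ is the dual space. For $f \in S(X^* )$ and real $\alpha$, the slice is $S(B(X), f, \alpha) := \{y \in B(X) : f(y) > \alpha\}$. For $0<t<2$, $f \in S(X^* )$ and $x \in S(X)$, define $s(x,f,t) := \inf\{\|x+y\| - 1 : y \in \ker f,\ \|y\| \geq t/4\}$. *)

(* Defs.v *)
From HB Require Import structures.
From mathcomp Require Import all_boot all_order all_algebra.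
From mathcomp Require Import all_classical all_reals all_analysis.
Set Implicit Arguments. Unset Strict Implicit. Unset Printing Implicit Defensive.
Import Order.TTheory GRing.Theory Num.Theory.
Import numFieldNormedType.Exports.
Local Open Scope classical_set_scope.
Local Open Scope ring_scope.

Section Banach.
Variables (R : realType) (X : normedModType R).

Definition unit_ball : set X := [set y | `|y| <= 1].
Definition unit_sphere : set X := [set y | `|y| = 1].

Definition is_dual (f : X -> R) : Prop :=
  (forall (a : R) (u v : X), f (a *: u + v) = a * f u + f v) /\ continuous f.

Definition dual_norm (f : X -> R) : R := sup [set `|f y| | y in unit_ball].

Definition in_dual_sphere (f : X -> R) : Prop := is_dual f /\ dual_norm f = 1.

Definition slice (f : X -> R) (alpha : R) : set X :=
  [set y | y \in unit_ball /\ alpha < f y].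

Definition diam (A : set X) : R :=
  sup [set `|y - z| | y in A & z in A].

(* s(x,f,t) = inf { ||x+y|| - 1 : y in ker f, ||y|| >= t/4 }, in the extended
   reals (infimum of the empty set is +oo) *)
Definition s_fun (x : X) (f : X -> R) (t : R) : \bar R :=
  ereal_inf [set ((`|x + y| - 1)%:E)%E | y in [set y | f y = 0 /\ t / 4 <= `|y|]].

End Banach.

(* Main.v *)
Require Import Defs.
From HB Require Import structures.
From mathcomp Require Import all_boot all_order all_algebra.
From mathcomp Require Import all_classical all_reals all_analysis.
From mathcomp Require Import lra.
Import Order.TTheory GRing.Theory Num.Theory.
Import numFieldNormedType.Exports.
Local Open Scope classical_set_scope.
Local Open Scope ring_scope.

Theorem mainTheorem1 (R : realType) (X : completeNormedModType R) (x : X) (t : R) :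
  x \in @unit_sphere R X -> 0 < t < 2 ->
  forall (f : X -> R) (alpha : R),
    in_dual_sphere f -> 0 < alpha < 1 ->
    x \in slice f alpha ->
    diam (slice f alpha) < t / 5 ->
    ((Num.min ((f x - alpha) / alpha) (t / 20))%:E <= s_fun x f t)%E /\
    0 < Num.min ((f x - alpha) / alpha) (t / 20).
Proof.
move=> hx /andP[t0 t2] f alpha [[lin _] _] /andP[a0 a1] hxS hdiam.
have f0 : f 0 = 0.
  have := lin 1 0 0; rewrite scaler0 addr0 mul1r => h; lra.
have fadd u v : f (u + v) = f u + f v by rewrite -[u]scale1r lin mul1r scale1r.
have fsc a u : f (a *: u) = a * f u by rewrite -[a *: u]addr0 lin f0 addr0.
move: hx; rewrite inE /unit_sphere /= => nx.
move: (hxS); rewrite inE /slice /= => -[_ fxa].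
have Sdiam p q : slice f alpha p -> slice f alpha q -> `|p - q| <= diam (slice f alpha).
  move=> hp hq; apply: ub_le_sup; last by exists p => //; exists q.
  exists 2 => _ [p' [hp' _] [q' [hq' _] <-]].
  move: hp' hq'; rewrite !inE /unit_ball /= => hp' hq'.
  apply: (le_trans (ler_normB _ _)); lra.
have mpos : 0 < Num.min ((f x - alpha) / alpha) (t / 20).
  rewrite lt_min; apply/andP; split; last lra.
  apply: divr_gt0 => //; lra.
split => //.
apply/ereal_infP => _ [y [fy ty] <-]; rewrite lee_fin.
rewrite leNgt; apply/negP => hlt.
move: hlt; rewrite lt_min => /andP[h1 h2].
have hy : 0 <= `|y| by [].
have nxy : `|x + y| > 0.
  rewrite normr_gt0; apply/negP => /eqP e.
  have := fadd x y; rewrite e f0 fy addr0 => e'; lra.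
case: (leP 1 `|x + y|) => hn.
- set n := `|x + y|.
  set z := n^-1 *: (x + y).
  have hz : slice f alpha z.
    split.
      rewrite inE /unit_ball /= /z normrZ ger0_norm; last by rewrite invr_ge0 ltW.
      by rewrite mulVf ?gt_eqF.
    rewrite /z fsc fadd fy addr0.
    have := h1; rewrite ltr_pdivlMr // => h.
    rewrite mulrC ltr_pdivlMr // /n; nra.
  have hxS' : slice f alpha x by move: hxS; rewrite inE.
  have hd := Sdiam _ _ hz hxS'.
  have key : n *: y = (n - 1) *: (x + y) + (y - (n - 1) *: x).
    by rewrite scalerDr !scalerBl !scale1r; rewrite addrC addrA addrNK addrC subrK.
  have e : y - (n - 1) *: x = n *: (z - x).
    rewrite scalerBr /z scalerA mulfV ?gt_eqF // scale1r scalerBl scale1r.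
    by rewrite opprB addrA (addrC y x).
  have := ler_normD ((n - 1) *: (x + y)) (y - (n - 1) *: x).
  rewrite -key e !normrZ !ger0_norm ?subr_ge0 ?(ltW nxy) //.
  move=> hh; rewrite /n in hh; nra.
- have hS : slice f alpha (x + y).
    split; first by rewrite inE /unit_ball /=; lra.
    by rewrite fadd fy addr0.
  have hxS' : slice f alpha x by move: hxS; rewrite inE.
  have := Sdiam _ _ hS hxS'.
  rewrite addrC addKr => hh.
  have := le_lt_trans hh hdiam; move: ty t0; clear; move=> ty t0 hy5; lra.
Qed.
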